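(* Let $G$ be a connected graph, let $u\in V(G)$ with set of neighbours $N_G(u)=\{p_1,\dots,p_n\}$, $n\ge 2$, where $u$ is joined to $p_i$ by $a_i\ge 1$ edges for each $i$. If $u$ is not a cut vertex, then with $H=G-u$, $$t(G)=\Big(\sum_{i=1}^n a_i\Big)t(H)+\sum_{\substack{S\subset N_G(u)\\ |S|\ge 2}}\Big(\prod_{i\in I_S}a_i\Big)t(H_S),$$ where $I_S$ is the set of indices of the vertices in $S$ and $H_S$ is the graph obtained from $H$ by identifying all vertices of $S$ into one vertex.
   Context: Graphs are finite and may have multiple edges and loops; $t(H)$ is the number of spanning trees of $H$. $G-u$ is the graph obtained from $G$ by deleting the vertex $u$ together with all edges incident to it. A cut vertex is a vertex whose deletion disconnects the graph. *)

(* Defs.v *)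
From mathcomp Require Import all_boot.
Set Implicit Arguments. Unset Strict Implicit. Unset Printing Implicit Defensive.

(* A finite multigraph (multiple edges and loops allowed) whose vertices are
   the elements of [vset] (a subset of a finType V) and whose edges are the
   elements of [eset] (a subset of a finType E); edge e joins [src e] and [tgt e]
   (a loop when they coincide). *)
Record mgraph (V E : finType) := MGraph {
  vset : {set V};
  eset : {set E};
  src : E -> V;
  tgt : E -> V }.

Section MGraph.
Variables (V E : finType).
Implicit Types (G : mgraph V E) (F : {set E}) (u v x y : V).

Definition wf_graph G :=
  [forall e in eset G, (src G e \in vset G) && (tgt G e \in vset G)].

Definition joins G (e : E) x y :=
  ((src G e == x) && (tgt G e == y)) || ((src G e == y) && (tgt G e == x)).

Definition adjF G F : rel V := fun x y => [exists e in F, joins G e x y].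

Definition connected G :=
  [forall x in vset G, forall y in vset G, connect (adjF G (eset G)) x y].

(* F is acyclic: no edge of F lies on a cycle of F, i.e. the endpoints of each
   edge e of F are not connected in F minus e (this also excludes loops and
   pairs of parallel edges). *)
Definition acyclic G F :=
  [forall e in F, ~~ connect (adjF G (F :\ e)) (src G e) (tgt G e)].

Definition spanning_tree G F :=
  [&& F \subset eset G,
      [forall x in vset G, forall y in vset G, connect (adjF G F) x y]
    & acyclic G F].

Definition ntrees G : nat := #|[set F : {set E} | spanning_tree G F]|.

Definition del_vertex G u : mgraph V E :=
  MGraph (vset G :\ u)
         [set e in eset G | (src G e != u) && (tgt G e != u)]
         (src G) (tgt G).

Definition cut_vertex G u := (u \in vset G) && ~~ connected (del_vertex G u).

Definition nbhd G u : {set V} :=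
  [set v in vset G | (v != u) && [exists e in eset G, joins G e u v]].

Definition mult G u v : nat := #|[set e in eset G | joins G e u v]|.

(* identification of all vertices of S into one vertex, represented by a
   chosen element of S (S is assumed to be a nonempty subset of the vertices) *)
Definition ident_map (S : {set V}) (d : V) (x : V) : V :=
  if x \in S then odflt d [pick y in S] else x.

Definition identify G (S : {set V}) : mgraph V E :=
  let phi := fun x => ident_map S x x in
  MGraph (phi @: vset G) (eset G) (fun e => phi (src G e)) (fun e => phi (tgt G e)).

End MGraph.

(* Main.v *)
Require Import Defs.
From mathcomp Require Import all_boot.
From Stdlib Require Import FunctionalExtensionality.
Set Implicit Arguments. Unset Strict Implicit. Unset Printing Implicit Defensive.

Lemma connect_map (T T' : finType) (e : rel T) (e' : rel T') (f : T -> T') :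
  (forall x y, e x y -> connect e' (f x) (f y)) ->
  forall x y, connect e x y -> connect e' (f x) (f y).
Proof.
move=> H x y /connectP [p pth ->]; elim: p x pth => [|z p IH] x /=; first by rewrite connect0.
case/andP=> exz pz; apply: connect_trans (H _ _ exz) (IH _ pz).
Qed.

Lemma connect_cut (T : finType) (e : rel T) (P : pred T) x y :
  connect e x y -> ~~ P x -> P y -> exists a b, [/\ ~~ P a, P b & e a b].
Proof.
move=> /connectP [p pth ->]; elim: p x pth => [|z p IH] x /=; first by move=> _ /negPf->.
case/andP=> exz pz Px Py. case Pz: (P z); first by exists x, z; rewrite Pz.
apply: IH pz _ Py; by rewrite Pz.
Qed.

Section Graph.
Variables (V E : finType) (G : mgraph V E).
Implicit Types (F : {set E}).

Lemma joinsC e x y : joins G e x y = joins G e y x.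
Proof. by rewrite /joins orbC. Qed.

Lemma joins_st e : joins G e (src G e) (tgt G e).
Proof. by rewrite /joins !eqxx. Qed.

Lemma adjF_sym F : symmetric (adjF G F).
Proof.
move=> x y; apply/existsP/existsP => -[e /andP[eF j]]; exists e; by rewrite eF joinsC.
Qed.

Lemma cadjC F x y : connect (adjF G F) x y = connect (adjF G F) y x.
Proof. by apply: sym_connect_sym; apply: adjF_sym. Qed.

Lemma adjF_edge F e x y : e \in F -> joins G e x y -> adjF G F x y.
Proof. by move=> eF j; apply/existsP; exists e; rewrite eF. Qed.

Lemma cadj_edge F e : e \in F -> connect (adjF G F) (src G e) (tgt G e).
Proof. by move=> eF; apply: connect1; apply: adjF_edge eF (joins_st e). Qed.

Lemma path_avoid F e0 v x p : path (adjF G F) x p -> v \notin x :: p ->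
  (src G e0 = v \/ tgt G e0 = v) -> path (adjF G (F :\ e0)) x p.
Proof.
move=> + + he0; elim: p x => [|z p IH] x //=.
case/andP=> /existsP[e /andP[eF j]] pz; rewrite !inE negb_or => /andP[xv]; rewrite negb_or => /andP[zv pv].
apply/andP; split; last by apply: IH => //; rewrite inE negb_or zv.
apply: (adjF_edge _ j); rewrite !inE eF andbT; apply/eqP => ee0; subst e.
move: j; rewrite /joins; case: he0 => ->; rewrite (negPf xv) (negPf zv) ?andbF //.
Qed.

End Graph.

Section Star.
Variables (V E : finType) (G : mgraph V E).
Implicit Types (F : {set E}).
Variables (u s0 : V) (S : {set V}) (A : {set E}).
Hypothesis uS : u \notin S.
Hypothesis hpick : [pick y in S] = Some s0.
Hypothesis A1 : forall e, e \in A -> exists2 s, s \in S & joins G e u s.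
Hypothesis A2 : forall s, s \in S -> exists2 e, e \in A & joins G e u s.

Definition avoid u F := forall e, e \in F -> (src G e != u) && (tgt G e != u).

Let HS := identify (del_vertex G u) S.
Let phi x := ident_map S x x.
Let psi x := if (x == u) || (x \in S) then s0 else x.

Lemma phiE x : phi x = if x \in S then s0 else x.
Proof. by rewrite /phi /ident_map hpick. Qed.

Lemma s0S : s0 \in S.
Proof. by move: hpick; case: pickP => // y yS [<-]. Qed.

Lemma s0u : s0 != u.
Proof. by apply: contraNneq uS => <-; exact: s0S. Qed.

Lemma psi_phi x : x != u -> psi x = phi x.
Proof. by rewrite phiE /psi => /negPf->. Qed.

Lemma joinsHS e x y : joins HS e x y =
  ((phi (src G e) == x) && (phi (tgt G e) == y)) || ((phi (src G e) == y) && (phi (tgt G e) == x)).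
Proof. by []. Qed.

Lemma joins_ends e a b s : joins G e a b -> joins G e u s ->
  ((a == u) || (a == s)) && ((b == u) || (b == s)).
Proof.
rewrite /joins => /orP[] /andP[/eqP-> /eqP->] /orP[] /andP[/eqP-> /eqP->]; by rewrite !eqxx ?orbT.
Qed.

Lemma CE F x y : avoid u F ->
  connect (adjF G (F :|: A)) x y = connect (adjF HS F) (psi x) (psi y).
Proof.
move=> FA; apply/idP/idP.
  apply: connect_map => a b /existsP[e /andP[]]; rewrite inE => /orP[eF|eA] j.
    have /andP[su tu] := FA e eF.
    apply: connect1; apply/existsP; exists e; rewrite eF /= joinsHS -!psi_phi //.
    by case/orP: j => /andP[/eqP-> /eqP->]; rewrite !eqxx ?orbT.
  have [s sS js] := A1 eA.
  have /andP[ha hb] := joins_ends j js.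
  have -> : psi a = s0 by rewrite /psi; case/orP: ha => /eqP->; rewrite ?eqxx ?sS ?orbT.
  have -> : psi b = s0 by rewrite /psi; case/orP: hb => /eqP->; rewrite ?eqxx ?sS ?orbT.
  exact: connect0.
set c := connect (adjF G (F :|: A)).
have cu : forall s, s \in S -> c u s.
  move=> s sS; have [e eA j] := A2 sS; apply: connect1; apply: (adjF_edge _ j).
  by rewrite inE eA orbT.
have cpsi : forall x, c x (psi x).
  move=> z; rewrite /psi; case: eqP => [->|zu] /=; first exact: cu s0S.
  case: ifP => zS; last exact: connect0.
  by apply: connect_trans (cu _ s0S); rewrite /c cadjC; apply: cu.
have cc : forall a b, connect (adjF HS F) a b -> c a b.
  apply: (connect_map (f := id)) => a b /existsP[e /andP[eF]]; rewrite joinsHS.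
  have /andP[su tu] := FA e eF.
  have ce : c (src G e) (tgt G e) by apply: cadj_edge; rewrite inE eF.
  rewrite -!psi_phi // => /orP[] /andP[/eqP<- /eqP<-].
    apply: connect_trans (connect_trans _ ce) (cpsi _).
    by rewrite /c cadjC; apply: cpsi.
  rewrite /c cadjC.
  apply: connect_trans (connect_trans _ ce) (cpsi _).
  by rewrite /c cadjC; apply: cpsi.
move=> h; apply: connect_trans (cpsi x) (connect_trans (cc _ _ h) _).
by rewrite /c cadjC; apply: cpsi.
Qed.


Hypothesis A3 : forall e e' s, e \in A -> e' \in A -> joins G e u s -> joins G e' u s -> e = e'.

Lemma adj_phi F a b : adjF G F a b -> adjF HS F (phi a) (phi b).
Proof.
move=> /existsP[e /andP[eF j]]; apply/existsP; exists e; rewrite eF /= joinsHS.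
by case/orP: j => /andP[/eqP-> /eqP->]; rewrite !eqxx ?orbT.
Qed.

Lemma noreach F x : avoid u F -> x != u -> ~~ connect (adjF G F) x u.
Proof.
move=> FA xu; apply/negP => /(connect_cut (P := fun z => z == u)) []; rewrite ?eqxx //.
move=> a [b [au /eqP bu /existsP[e /andP[eF j]]]]; subst b.
have /andP[su tu] := FA e eF.
by move: j; rewrite /joins (negPf su) (negPf tu) !andbF.
Qed.

Lemma Lcyc F v w : connect (adjF G F) v w -> v \in S -> w \in S -> v != w -> ~~ acyclic HS F.
Proof.
move=> /connectP [p pth ->] vS wS vw.
move: wS vw; case: (shortenP pth) => p' pth' up' _ wS vw.
case: p' pth' up' wS vw => [|x1 q] /=; first by rewrite eqxx.
case/andP=> /existsP[e0 /andP[e0F j0]] pq up wS vw.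
have e0v : src G e0 = v \/ tgt G e0 = v.
  by move: j0; rewrite /joins => /orP[] /andP[/eqP-> /eqP->]; [left|right].
have vnot : v \notin x1 :: q by move: up; rewrite -/(uniq (v :: x1 :: q)) /= => /andP[].
have pq' := path_avoid pq vnot e0v.
have cq : connect (adjF G (F :\ e0)) x1 (last x1 q) by apply/connectP; exists q.
have := connect_map (fun a b h => connect1 (@adj_phi _ a b h)) cq.
rewrite [phi (last x1 q)]phiE wS -[s0]/(if true then s0 else v) -vS -phiE => cc.
apply/negP => /forallP /(_ e0); rewrite e0F /= => /negP; apply.
case/orP: j0 => /andP[/eqP-> /eqP->] //.
by rewrite (cadjC HS).
Qed.

Lemma AL F a : avoid u F -> acyclic HS F -> a \in A ->
  ~~ connect (adjF G ((F :|: A) :\ a)) (src G a) (tgt G a).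
Proof.
move=> FA acy aA; have [v vS jv] := A1 aA.
have vu : v != u by apply: contraNneq uS => <-.
suff: ~~ connect (adjF G ((F :|: A) :\ a)) u v.
  by case/orP: jv => /andP[/eqP-> /eqP->] //; rewrite cadjC.
apply/negP => /(connect_cut (P := fun z => connect (adjF G F) v z)) [].
- by apply: noreach.
- exact: connect0.
move=> a' [b' [na' pb' /existsP[e /andP[]]]].
rewrite !inE => /andP[ea /orP[eF|eA]] j.
  by case/negP: na'; apply: connect_trans pb' _; rewrite cadjC; apply: connect1; apply: adjF_edge eF j.
have [w wS jw] := A1 eA.
have /andP[ha hb] := joins_ends j jw.
have bw : b' = w.
  case/orP: hb => /eqP // bu; subst b'.
  by move: pb'; rewrite (negPf (noreach FA vu)).
subst b'.
have vw : v != w by apply: contraNneq ea => vw; subst w; apply/eqP; apply: A3 jw jv.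
by case/negP: (Lcyc pb' vS wS vw).
Qed.


Lemma notA F e : avoid u F -> e \in F -> e \notin A.
Proof.
move=> FA eF; apply/negP => eA; have [s _ j] := A1 eA; have /andP[su tu] := FA e eF.
by move: j; rewrite /joins (negPf su) (negPf tu) /= andbF.
Qed.

Lemma avoidD F e : avoid u F -> avoid u (F :\ e).
Proof. by move=> FA z; rewrite inE => /andP[_ /FA]. Qed.

Lemma psi_in x : u \in vset G -> S \subset vset G -> x \in vset G -> psi x \in vset HS.
Proof.
move=> uW SW xW; case: (eqVneq x u) => [->|xu].
  have -> : psi u = s0 by rewrite /psi eqxx.
  apply/imsetP; exists s0; last by have := phiE s0; rewrite s0S.
  by rewrite !inE s0u (subsetP SW _ s0S).
rewrite psi_phi //; apply: imset_f; by rewrite !inE xu.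
Qed.

Lemma KL F : avoid u F -> F \subset eset G -> A \subset eset G -> u \in vset G -> S \subset vset G ->
  spanning_tree G (F :|: A) = spanning_tree HS F.
Proof.
move=> FA FG AG uW SW; rewrite /spanning_tree.
have -> : (F :|: A \subset eset G) = true by rewrite subUset FG AG.
have -> : (F \subset eset HS) = true.
  by apply/subsetP => e eF; rewrite /HS /= inE (subsetP FG e eF) FA.
rewrite /=; congr (_ && _); first apply/idP/idP.
- move/forall_inP => h; apply/forall_inP => x /imsetP [x' x'W ->].
  apply/forall_inP => y /imsetP [y' y'W ->].
  move: x'W y'W; rewrite !inE => /andP[x'u x'W] /andP[y'u y'W].
  rewrite -/(phi x') -/(phi y') -!psi_phi // -CE //.
  exact: (forall_inP (h _ x'W) _ y'W).
- move/forall_inP => h; apply/forall_inP => x xW; apply/forall_inP => y yW.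
  rewrite CE //; exact: (forall_inP (h _ (psi_in uW SW xW)) _ (psi_in uW SW yW)).
have eqD : forall e, e \in F -> (F :|: A) :\ e = (F :\ e) :|: A.
  move=> e eF; apply/setP => z; rewrite !inE; case: eqP => // ->.
  by rewrite (negPf (notA FA eF)).
have Fpart : forall e, e \in F -> connect (adjF G ((F :|: A) :\ e)) (src G e) (tgt G e)
   = connect (adjF HS (F :\ e)) (src HS e) (tgt HS e).
  move=> e eF; have /andP[su tu] := FA e eF.
  by rewrite eqD // CE ?psi_phi //; apply: avoidD.
rewrite /acyclic; apply/idP/idP.
- move/forall_inP => h; apply/forall_inP => e eF.
  by rewrite -Fpart //; apply: h; rewrite inE eF.
- move=> acy; apply/forall_inP => e; rewrite inE => /orP[eF|eA].
    by rewrite Fpart //; exact: (forall_inP acy).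
  exact: AL.
Qed.

End Star.

Section Main.
Variables (V E : finType) (G : mgraph V E) (u : V).
Implicit Types (F T : {set E}) (S : {set V}).
Hypothesis wf : wf_graph G.
Hypothesis uW : u \in vset G.

Let N := nbhd G u.
Let HH := del_vertex G u.
Definition Sset T := [set v in N | [exists e in T, joins G e u v]].
Definition delta := [set e | (src G e == u) || (tgt G e == u)].

Lemma joins_uniq e v s : joins G e u v -> joins G e u s -> v != u -> s = v.
Proof.
rewrite /joins => /orP[] /andP[/eqP a /eqP b] /orP[] /andP[/eqP c /eqP d] vu; congruence.
Qed.

Lemma NW : N \subset vset G.
Proof. by apply/subsetP => v; rewrite inE => /andP[]. Qed.

Lemma Nu v : v \in N -> v != u.
Proof. by rewrite inE => /and3P[]. Qed.

Lemma tree_sub T : spanning_tree G T -> T \subset eset G.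
Proof. by case/and3P. Qed.

Lemma tree_noloop T e : spanning_tree G T -> e \in T -> src G e != tgt G e.
Proof.
case/and3P => _ _ /forall_inP acy eT; apply: contraNneq (acy e eT) => ->; exact: connect0.
Qed.

Lemma tree_uniq T e e' w : spanning_tree G T -> e \in T -> e' \in T ->
  joins G e u w -> joins G e' u w -> e = e'.
Proof.
case/and3P => _ _ /forall_inP acy eT e'T j j'; apply/eqP/negPn/negP => ne.
have c : connect (adjF G (T :\ e)) u w.
  by apply: connect1; apply: (adjF_edge _ j'); rewrite !inE eq_sym ne.
move: (acy e eT); case/orP: j => /andP[/eqP-> /eqP->]; first by rewrite c.
by rewrite cadjC c.
Qed.

Lemma Sset_sub T : Sset T \subset N.
Proof. by apply/subsetP => v; rewrite inE => /andP[]. Qed.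

Lemma Sset_n0 T : spanning_tree G T -> N != set0 -> Sset T != set0.
Proof.
move=> st /set0Pn [v vN]; have /and3P[TG /forall_inP sp _] := st.
have c := forall_inP (sp u uW) v (subsetP NW v vN).
have [a [b [/negPn/eqP au bu /existsP[e /andP[eT j]]]]] :=
  connect_cut (P := fun z => z != u) c (introT negPn (eqxx u)) (Nu vN).
subst a; apply/set0Pn; exists b; rewrite !inE bu.
have eG := subsetP TG e eT.
have /andP[sW tW] := forall_inP wf e eG.
have bW : b \in vset G by move: j sW tW; rewrite /joins => /orP[] /andP[/eqP-> /eqP->].
rewrite bW /=; apply/andP; split; apply/existsP; exists e; by rewrite ?eG ?eT.
Qed.


Definition Ev v := [set e in eset G | joins G e u v].

Lemma pfam_in e0 S f v : f \in pfamily e0 S Ev -> v \in S -> (f v \in eset G) && joins G (f v) u v.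
Proof. by case/pfamilyP => _ h vS; have := h v vS; rewrite inE. Qed.

Lemma pfam_out e0 S f v : f \in pfamily e0 S Ev -> v \notin S -> f v = e0.
Proof. by case/pfamilyP => /supportP h _; apply: h. Qed.

Lemma star_facts e0 S f : S \subset N -> f \in pfamily e0 S Ev ->
  [/\ (forall e, e \in f @: S -> exists2 s, s \in S & joins G e u s),
      (forall s, s \in S -> exists2 e, e \in f @: S & joins G e u s),
      (forall e e' s, e \in f @: S -> e' \in f @: S -> joins G e u s -> joins G e' u s -> e = e'),
      f @: S \subset eset G & f @: S \subset delta].
Proof.
move=> SN fP; split.
- move=> e /imsetP[v vS ->]; exists v => //; by case/andP: (pfam_in fP vS).
- move=> s sS; exists (f s); first exact: imset_f. by case/andP: (pfam_in fP sS).
- move=> e e' s /imsetP[v vS ->] /imsetP[w wS ->] j j'.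
  have /andP[_ jv] := pfam_in fP vS; have /andP[_ jw] := pfam_in fP wS.
  have := joins_uniq jv j (Nu (subsetP SN v vS)).
  have := joins_uniq jw j' (Nu (subsetP SN w wS)).
  by move=> -> ->.
- apply/subsetP => e /imsetP[v vS ->]; by case/andP: (pfam_in fP vS).
- apply/subsetP => e /imsetP[v vS ->]; have /andP[_ j] := pfam_in fP vS.
  by rewrite inE; case/orP: j => /andP[/eqP-> /eqP->]; rewrite eqxx ?orbT.
Qed.

Lemma HS_avoid S F : spanning_tree (identify HH S) F -> avoid G u F /\ F \subset eset G.
Proof.
case/and3P => /subsetP FH _ _; split.
  by move=> e /FH; rewrite /= inE => /andP[].
by apply/subsetP => e /FH; rewrite /= inE => /andP[].
Qed.

Lemma avoid_delta F : avoid G u F -> [disjoint F & delta].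
Proof.
move=> FA; apply/pred0P => e /=; apply/negP => /andP[/FA /andP[su tu]].
by rewrite inE (negPf su) (negPf tu).
Qed.


Lemma CountS S : S \subset N -> S != set0 ->
  #|[set T | spanning_tree G T & Sset T == S]| = (\prod_(v in S) mult G u v) * ntrees (identify HH S).
Proof.
move=> SN Sn0.
have [s0 hp] : exists s0, [pick y in S] = Some s0.
  case: pickP => [x _|h]; first by exists x.
  by case/set0Pn: Sn0 => x; rewrite h.
have s0S : s0 \in S by move: hp; case: pickP => // y yS [<-].
have uS : u \notin S by apply/negP => /(subsetP SN) /Nu; rewrite eqxx.
have SW : S \subset vset G := subset_trans SN NW.
have [e0 _] : exists e0 : E, true.
  by have := subsetP SN _ s0S; rewrite inE => /and3P[_ _ /existsP[e _]]; exists e.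
set Fam := [set f | f \in pfamily e0 S Ev].
set D := setX Fam [set F | spanning_tree (identify HH S) F].
pose h := fun p : {ffun V -> E} * {set E} => p.2 :|: [set p.1 v | v in S].
have Dfacts : forall p, p \in D ->
    [/\ p.1 \in pfamily e0 S Ev, spanning_tree (identify HH S) p.2 & spanning_tree G (h p)].
  move=> [f F]; rewrite !inE /= => /andP[fP stF]; split => //.
  have [A1 A2 A3 AG _] := star_facts SN fP.
  have [FA FG] := HS_avoid stF.
  by rewrite /h /= (KL uS hp A1 A2 A3 FA FG AG uW SW).
have hdiff : forall p, p \in D -> h p :\: delta = p.2 /\ h p :&: delta = p.1 @: S.
  move=> [f F] /Dfacts[fP stF _]; rewrite /= in fP stF.
  have [_ _ _ _ Ad] := star_facts SN fP.
  have [FA _] := HS_avoid stF; have dj := avoid_delta FA.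
  rewrite /h /=; split; apply/setP => e.
    rewrite in_setD in_setU; case eF: (e \in F) => /=; first by rewrite (disjointFr dj eF).
    by case eA: (e \in f @: S); rewrite ?andbF //= (subsetP Ad e eA).
  rewrite in_setI in_setU; case eF: (e \in F) => /=.
    rewrite (disjointFr dj eF) /=; apply/esym/negP => eA.
    by move: (subsetP Ad e eA); rewrite (disjointFr dj eF).
  by case eA: (e \in f @: S); rewrite ?andbF //= (subsetP Ad e eA).
have Sset_h : forall p, p \in D -> Sset (h p) = S.
  move=> [f F] pD; have [fP stF _] := Dfacts _ pD; rewrite /= in fP stF.
  have [A1 A2 A3 _ _] := star_facts SN fP; have [FA _] := HS_avoid stF.
  apply/setP => v; rewrite inE /h /=; apply/idP/idP.
  - case/andP => vN /existsP[e /andP[]]; rewrite in_setU => /orP[eF|eA] j.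
      have /andP[su tu] := FA e eF.
      by move: j; rewrite /joins (negPf su) (negPf tu) /= andbF.
    have [s sS js] := A1 e eA.
    by rewrite (joins_uniq js j (Nu (subsetP SN s sS))).
  - move=> vS; rewrite (subsetP SN v vS) /=; have [e eA j] := A2 v vS.
    by apply/existsP; exists e; rewrite in_setU eA orbT j.
have E1 : [set T | spanning_tree G T & Sset T == S] = h @: D.
  apply/setP => T; rewrite inE; apply/andP/imsetP.
  - case=> stT /eqP SS.
    pose f := [ffun v => if v \in S then odflt e0 [pick e in T | joins G e u v] else e0].
    have fv : forall v, v \in S -> (f v \in T) && joins G (f v) u v.
      move=> v vS; rewrite /f ffunE vS; case: pickP => [e /andP[eT j]|none] /=; first by rewrite eT j.
      exfalso; move: vS; rewrite -SS inE => /andP[_ /existsP[e /andP[eT j]]].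
      by move: (none e); rewrite eT j.
    have fP : f \in pfamily e0 S Ev.
      apply/pfamilyP; split.
        by apply/supportP => v vS; rewrite /f ffunE (negPf vS).
      move=> v vS; have /andP[fT j] := fv v vS; by rewrite inE (subsetP (tree_sub stT) _ fT) j.
    have Aeq : f @: S = T :&: delta.
      apply/setP => e; apply/imsetP/idP.
      - case=> v vS ->; have /andP[fT j] := fv v vS; rewrite in_setI fT inE.
        by case/orP: j => /andP[/eqP-> /eqP->]; rewrite eqxx ?orbT.
      - rewrite in_setI inE => /andP[eT ed].
        have eG := subsetP (tree_sub stT) e eT.
        have /andP[sW tW] := forall_inP wf e eG.
        have nl := tree_noloop stT eT.
        have [w [j wu wW]] : exists w, [/\ joins G e u w, w != u & w \in vset G].
          case/orP: ed => /eqP eu.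
          - exists (tgt G e); split => //; first by rewrite /joins eu !eqxx.
            by rewrite -eu eq_sym.
          - exists (src G e); split => //; first by rewrite /joins eu !eqxx orbT.
            by rewrite -eu.
        have wS : w \in S.
          rewrite -SS inE; apply/andP; split.
            by rewrite inE wW wu /=; apply/existsP; exists e; rewrite eG j.
          by apply/existsP; exists e; rewrite eT j.
        exists w => //; have /andP[fT fj] := fv w wS; exact: tree_uniq stT eT fT j fj.
    set F := T :\: delta.
    have stF : spanning_tree (identify HH S) F.
      have [A1 A2 A3 AG _] := star_facts SN fP.
      have FA : avoid G u F by move=> e; rewrite in_setD inE negb_or => /andP[-> _].
      have FG : F \subset eset G by apply: subset_trans (subsetDl T delta) (tree_sub stT).
      rewrite -(KL uS hp A1 A2 A3 FA FG AG uW SW) Aeq.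
      by rewrite setUC setID.
    exists (f, F); first by apply/setXP; split; rewrite inE.
    by rewrite /h /= Aeq setUC setID.
  - case=> p pD ->; have [_ _ st] := Dfacts p pD; by split; [exact st | rewrite Sset_h].
have inj : {in D &, injective h}.
  move=> [f1 F1] [f2 F2] p1 p2 eq.
  have [d1 i1] := hdiff _ p1; have [d2 i2] := hdiff _ p2.
  have FF : F1 = F2 by move: d1 d2; rewrite /= eq => -> ->.
  have AA : f1 @: S = f2 @: S by move: i1 i2; rewrite /= eq => -> ->.
  have [fP1 _ _] := Dfacts _ p1; have [fP2 _ _] := Dfacts _ p2.
  rewrite /= in fP1 fP2.
  congr (_, _) => //; apply/ffunP => v.
  case vS: (v \in S); last by rewrite (pfam_out fP1) ?vS // (pfam_out fP2) ?vS.
  have : f1 v \in f2 @: S by rewrite -AA imset_f.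
  case/imsetP => w wS e12.
  have /andP[_ j1] := pfam_in fP1 vS; have /andP[_ j2] := pfam_in fP2 wS.
  rewrite e12 in j1.
  by rewrite e12 (joins_uniq j2 j1 (Nu (subsetP SN w wS))).
rewrite E1 card_in_imset // cardsX; congr (_ * _).
by rewrite cardsE card_pfamily foldrE big_map big_enum.
Qed.


Lemma sum_all : N != set0 -> ntrees G =
  \sum_(S : {set V} | (S \subset N) && (S != set0)) (\prod_(v in S) mult G u v) * ntrees (identify HH S).
Proof.
move=> Nn0.
rewrite /ntrees -sum1_card (partition_big (fun T : {set E} => Sset T) (fun S : {set V} => (S \subset N) && (S != set0))).
  apply: eq_bigr => S /andP[SN Sn0]; rewrite -CountS // -sum1_card.
  by apply: eq_bigl => T; rewrite !inE.
by move=> T; rewrite inE => st; rewrite Sset_sub Sset_n0.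
Qed.

Lemma ident1 v : identify HH [set v] = HH.
Proof.
have phiv : forall x, ident_map [set v] x x = x.
  move=> x; rewrite /ident_map; case: ifP => // /set1P ->.
  by case: pickP => [y /set1P -> | h].
rewrite /identify /HH /del_vertex /=; congr MGraph.
- by rewrite (eq_imset _ phiv) imset_id.
- by apply: functional_extensionality => e; apply: phiv.
- by apply: functional_extensionality => e; apply: phiv.
Qed.

End Main.

Unset Implicit Arguments.

Theorem theorem5p8 (V E : finType) (G : mgraph V E) (u : V) :
  wf_graph G -> u \in vset G -> connected G ->
  2 <= #|nbhd G u| -> ~~ cut_vertex G u ->
  ntrees G =
    (\sum_(v in nbhd G u) mult G u v) * ntrees (del_vertex G u)
    + \sum_(S : {set V} | (S \subset nbhd G u) && (2 <= #|S|))
        (\prod_(v in S) mult G u v) * ntrees (identify (del_vertex G u) S).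
Proof.
move=> wf uW _ N2 _.
have Nn0 : nbhd G u != set0 by rewrite -card_gt0; apply: leq_trans N2.
rewrite (sum_all wf uW Nn0) (bigID (fun S : {set V} => 2 <= #|S|)) /= addnC.
congr (_ + _).
- rewrite big_distrl /=.
  transitivity (\sum_(S in [set [set v] | v in nbhd G u])
     (\prod_(w in S) mult G u w) * ntrees (identify (del_vertex G u) S)).
    apply: eq_bigl => S; apply/idP/imsetP.
    + case/andP => /andP[SN Sn0] lt2.
      have : #|S| == 1.
        move: lt2 Sn0; rewrite -card_gt0; case: #|S| => [|[|n]] //.
      case/cards1P => v Sv; exists v => //; by rewrite -sub1set -Sv.
    + case=> v vN ->; rewrite sub1set vN cards1 /= andbT; apply/set0Pn; exists v; exact: set11.
  rewrite big_imset /=; last by move=> x y _ _; apply: set1_inj.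
  by apply: eq_bigr => v _; rewrite big_set1 ident1.
- apply: eq_bigl => S.
  case h2: (2 <= #|S|); last by rewrite !andbF.
  by rewrite !andbT -card_gt0 (ltnW h2) andbT.
Qed.
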